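(* The structure $\mathbb{M}_0=(\{0,1,2\};\psi_2,\rho_2,\{0,1\},\{0\},\{1\},\{2\})$ pp-constructs $\mathbb{M}_0'=(\{0,1,2\};\psi_2,\rho_2,\tau_0,\tau_1,\{0,1\},\{0\},\{1\},\{2\})$, and $\mathbb{M}_0'$ pp-constructs $\mathbb{M}_0$.
   Context: $\psi_2=\{(0,1),(1,0),(2,2)\}$; $\mu_2$ is the equivalence relation on $\{0,1,2\}$ with classes $\{0,1\},\{2\}$ and $\rho_2=\{0,1,2\}^2\setminus\mu_2$; $\tau_0=\{(0,0),(1,0),(2,1)\}$; $\tau_1=\{(0,1),(1,1),(2,0)\}$. A relation is pp-definable in $\mathbb{A}$ if definable by a formula using the relations of $\mathbb{A}$, equality, conjunction and existential quantification. A pp-power of $\mathbb{A}$ is a structure isomorphic to one with domain $A^n$ whose $k$-ary relations, viewed as $kn$-ary relations on $A$, are pp-definable in $\mathbb{A}$. $\mathbb{A}$ pp-constructs $\mathbb{B}$ if $\mathbb{B}$ is homomorphically equivalent (homomorphisms in both directions) to a pp-power of $\mathbb{A}$. *)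

(* Defs.v *)
From mathcomp Require Import all_boot.
Set Implicit Arguments. Unset Strict Implicit. Unset Printing Implicit Defensive.

(* A relation of arity [ar] on A: a predicate on tuples, encoded as lists;
   only lists of length [ar] are ever considered. *)
Record relation (A : Type) := Rel { ar : nat; rl : seq A -> Prop }.

Definition rel_dflt (A : Type) : relation A := @Rel A 0 (fun _ => False).

Record structure := Struct { carrier : Type; rels : seq (relation carrier) }.

Definition nth_rel (M : structure) (i : nat) : relation (carrier M) :=
  nth (@rel_dflt _) (rels M) i.

Definition hom (M N : structure) (f : carrier M -> carrier N) : Prop :=
  map (@ar _) (rels M) = map (@ar _) (rels N) /\
  forall i, i < size (rels M) ->
    forall t : seq (carrier M), size t = ar (nth_rel M i) ->
      rl (nth_rel M i) t -> rl (nth_rel N i) (map f t).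

Definition hom_equiv (M N : structure) : Prop :=
  (exists f, @hom M N f) /\ (exists g, @hom N M g).

Inductive ppformula :=
| PAtom of nat & seq nat      (* R_i(x_{v1},...,x_{vk}) *)
| PEq of nat & nat
| PAnd of ppformula & ppformula
| PEx of nat & ppformula.

Definition upd (A : Type) (env : nat -> A) (x : nat) (a : A) : nat -> A :=
  fun y => if y == x then a else env y.

Fixpoint sat (M : structure) (env : nat -> carrier M) (phi : ppformula) : Prop :=
  match phi with
  | PAtom i vs => i < size (rels M) /\ size vs = ar (nth_rel M i) /\
                  rl (nth_rel M i) (map env vs)
  | PEq x y => env x = env y
  | PAnd p q => sat env p /\ sat env q
  | PEx x p => exists a, sat (upd env x a) p
  end.

Definition pp_definable (M : structure) (k : nat) (S : seq (carrier M) -> Prop) : Prop :=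
  exists phi : ppformula, forall env : nat -> carrier M,
    S (mkseq env k) <-> sat env phi.

(* The j-th block of n consecutive variables, as an element of A^n. *)
Definition blk (A : Type) (n : nat) (env : nat -> A) (j : nat) : 'I_n -> A :=
  fun i => env (j * n + i).

(* A k-ary relation on A^n, viewed as a kn-ary relation on A, is pp-definable. *)
Definition pp_definable_power (M : structure) (n : nat)
    (R : relation ('I_n -> carrier M)) : Prop :=
  exists phi : ppformula, forall env : nat -> carrier M,
    rl R (mkseq (@blk _ n env) (ar R)) <-> sat env phi.

(* M pp-constructs N: N is homomorphically equivalent to a pp-power of M
   (isomorphic copies are absorbed by homomorphic equivalence). *)
Definition pp_constructs (M N : structure) : Prop :=
  exists (n : nat) (C : seq (relation ('I_n -> carrier M))),
    0 < n /\ (forall i, i < size C -> @pp_definable_power M n (nth (@rel_dflt _) C i)) /\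
    hom_equiv (@Struct ('I_n -> carrier M) C) N.

Definition D3 := 'I_3.
Definition vals (t : seq D3) : seq nat := map (@nat_of_ord 3) t.

Definition psi2 : relation D3 :=
  Rel 2 (fun t => vals t = [:: 0; 1] \/ vals t = [:: 1; 0] \/ vals t = [:: 2; 2]).
Definition mu2 (a b : nat) : Prop := (a < 2) = (b < 2).
Definition rho2 : relation D3 :=
  Rel 2 (fun t => exists a b : D3, t = [:: a; b] /\ ~ mu2 a b).
Definition tau0 : relation D3 :=
  Rel 2 (fun t => vals t = [:: 0; 0] \/ vals t = [:: 1; 0] \/ vals t = [:: 2; 1]).
Definition tau1 : relation D3 :=
  Rel 2 (fun t => vals t = [:: 0; 1] \/ vals t = [:: 1; 1] \/ vals t = [:: 2; 0]).
Definition unary (P : nat -> Prop) : relation D3 :=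
  Rel 1 (fun t => exists a : D3, t = [:: a] /\ P a).

Definition M0 : structure :=
  @Struct D3 [:: psi2; rho2; unary (fun a => a = 0 \/ a = 1);
                 unary (fun a => a = 0); unary (fun a => a = 1); unary (fun a => a = 2)].

Definition M0' : structure :=
  @Struct D3 [:: psi2; rho2; tau0; tau1; unary (fun a => a = 0 \/ a = 1);
                 unary (fun a => a = 0); unary (fun a => a = 1); unary (fun a => a = 2)].

(* Main.v *)
Require Import Defs.
From mathcomp Require Import all_boot.
Set Implicit Arguments. Unset Strict Implicit. Unset Printing Implicit Defensive.

Definition o0 : D3 := @Ordinal 3 0 isT.
Definition o1 : D3 := @Ordinal 3 1 isT.
Definition o2 : D3 := @Ordinal 3 2 isT.
Definition d3s : seq D3 := [:: o0; o1; o2].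
Arguments d3s : simpl never.

Lemma mem_d3s (a : D3) : a \in d3s.
Proof. by case: a => [[|[|[|m]]] Hm]. Qed.

Lemma allD3 (P : pred D3) : all P d3s -> forall a, P a.
Proof. move=> H a; exact: (allP H _ (mem_d3s a)). Qed.

Fixpoint fvs (phi : ppformula) : seq nat :=
  match phi with
  | PAtom _ vs => vs
  | PEq x y => [:: x; y]
  | PAnd p q => fvs p ++ fvs q
  | PEx x p => filter (fun y => y != x) (fvs p)
  end.

Lemma sat_ext (M : structure) (phi : ppformula) (e1 e2 : nat -> carrier M) :
  (forall y, y \in fvs phi -> e1 y = e2 y) -> (sat e1 phi <-> sat e2 phi).
Proof.
elim: phi e1 e2 => [i vs|x y|p IHp q IHq|x p IHp] e1 e2 /= H.
- have -> : map e1 vs = map e2 vs.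
    by apply/eq_in_map => y Hy; apply: H.
  by [].
- by rewrite (H x) ?(H y) // !inE eqxx ?orbT.
- have H1 : sat e1 p <-> sat e2 p.
    by apply: IHp => y Hy; apply: H; rewrite mem_cat Hy.
  have H2 : sat e1 q <-> sat e2 q.
    by apply: IHq => y Hy; apply: H; rewrite mem_cat Hy orbT.
  by split=> -[A B]; split; [apply/H1|apply/H2|apply/H1|apply/H2].
- have E : forall a, sat (upd e1 x a) p <-> sat (upd e2 x a) p.
    move=> a; apply: IHp => y Hy; rewrite /upd; case: eqP => // /eqP ne.
    by apply: H; rewrite mem_filter ne.
  by split=> -[a Ha]; exists a; apply/E.
Qed.

Fixpoint bsat (rb : nat -> seq D3 -> bool) (env : nat -> D3) (phi : ppformula) : bool :=
  match phi with
  | PAtom i vs => rb i (map env vs)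
  | PEq x y => env x == env y
  | PAnd p q => bsat rb env p && bsat rb env q
  | PEx x p => has (fun a => bsat rb (upd env x a) p) d3s
  end.

Lemma bsatEx rb env x p :
  bsat rb env (PEx x p) = has (fun a => bsat rb (upd env x a) p) d3s.
Proof. by []. Qed.

Definition rbfull (rs : seq (relation D3)) (relb : nat -> seq D3 -> bool) i t :=
  [&& i < size rs, size t == ar (nth (@rel_dflt _) rs i) & relb i t].

Lemma bsat_ok (rs : seq (relation D3)) (relb : nat -> seq D3 -> bool)
  (Hrel : forall i t, i < size rs -> size t = ar (nth (@rel_dflt _) rs i) ->
     (rl (nth (@rel_dflt _) rs i) t <-> relb i t))
  (env : nat -> D3) phi :
  @sat (@Struct D3 rs) env phi <-> bsat (rbfull rs relb) env phi.
Proof.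
elim: phi env => [i vs|x y|p IHp q IHq|x p IHp] env.
- rewrite /= /rbfull /nth_rel /=; split.
  + move=> [Hi [Hs Hr]]; rewrite Hi size_map Hs eqxx /=.
    by apply/(Hrel _ _ Hi); rewrite ?size_map.
  + case/and3P=> Hi /eqP Hs Hr; rewrite size_map in Hs.
    by split=> //; split=> //; apply/(Hrel _ _ Hi) => //; rewrite size_map.
- by split=> [/= ->|/eqP].
- split=> /= [[A B]|/andP [A B]]; first by rewrite (IHp env).1 ?(IHq env).1.
  by split; [apply/IHp|apply/IHq].
- split.
  + case=> a Ha; rewrite bsatEx; apply/hasP; exists a; first exact: mem_d3s.
    by apply/IHp.
  + by rewrite bsatEx => /hasP [a _ Ha]; exists a; apply/IHp.
Qed.

Definition vb (t : seq D3) := vals t.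
Definition psi2b t := (vb t == [:: 0; 1]) || (vb t == [:: 1; 0]) || (vb t == [:: 2; 2]).
Definition tau0b t := (vb t == [:: 0; 0]) || (vb t == [:: 1; 0]) || (vb t == [:: 2; 1]).
Definition tau1b t := (vb t == [:: 0; 1]) || (vb t == [:: 1; 1]) || (vb t == [:: 2; 0]).
Definition rho2b (t : seq D3) :=
  if t is [:: a; b] then (a < 2) != (b < 2) else false.
Definition unb (P : pred nat) (t : seq D3) := if t is [:: a] then P a else false.

Lemma psi2P t : rl psi2 t <-> psi2b t.
Proof.
rewrite /psi2b /vb /=; split.
- by case=> [->|[->|->]]; rewrite eqxx ?orbT.
- by case/orP=> [/orP[]|] /eqP ->; auto.
Qed.
Lemma tau0P t : rl tau0 t <-> tau0b t.
Proof.
rewrite /tau0b /vb /=; split.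
- by case=> [->|[->|->]]; rewrite eqxx ?orbT.
- by case/orP=> [/orP[]|] /eqP ->; auto.
Qed.
Lemma tau1P t : rl tau1 t <-> tau1b t.
Proof.
rewrite /tau1b /vb /=; split.
- by case=> [->|[->|->]]; rewrite eqxx ?orbT.
- by case/orP=> [/orP[]|] /eqP ->; auto.
Qed.
Lemma rho2P t : size t = 2 -> (rl rho2 t <-> rho2b t).
Proof.
case: t => [|a [|b [|]]] //= _; split.
- by case=> a' [b' [[-> ->] H]] /=; apply/eqP.
- by move=> /= /eqP H; exists a, b.
Qed.
Lemma unP (P : nat -> Prop) (p : pred nat) (HP : forall n, P n <-> p n) t :
  size t = 1 -> (rl (unary P) t <-> unb p t).
Proof.
case: t => [|a [|]] //= _; split.
- by case=> a' [[->]] /HP.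
- by move=> H; exists a; split=> //; apply/HP.
Qed.

Definition p01 : pred nat := fun n => (n == 0) || (n == 1).
Lemma p01P n : (n = 0 \/ n = 1) <-> p01 n.
Proof. by rewrite /p01; split=> [[]->//|/orP[]/eqP]; auto. Qed.
Lemma peqP (k n : nat) : (n = k) <-> (n == k).
Proof. by split=> [->|/eqP]. Qed.

Definition relb0 (i : nat) (t : seq D3) : bool :=
  match i with
  | 0 => psi2b t | 1 => rho2b t | 2 => unb p01 t
  | 3 => unb (fun n => n == 0) t | 4 => unb (fun n => n == 1) t
  | 5 => unb (fun n => n == 2) t | _ => false end.

Definition relb1 (i : nat) (t : seq D3) : bool :=
  match i with
  | 0 => psi2b t | 1 => rho2b t | 2 => tau0b t | 3 => tau1b t | 4 => unb p01 t
  | 5 => unb (fun n => n == 0) t | 6 => unb (fun n => n == 1) t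
  | 7 => unb (fun n => n == 2) t | _ => false end.

Lemma relb0_ok i t : i < size (rels M0) -> size t = ar (nth (@rel_dflt _) (rels M0) i) ->
  (rl (nth (@rel_dflt _) (rels M0) i) t <-> relb0 i t).
Proof.
case: i => [|[|[|[|[|[|i]]]]]] //= _ Hs.
- exact: psi2P.
- exact: rho2P.
- exact: unP p01P t Hs.
- exact: unP (peqP 0) t Hs.
- exact: unP (peqP 1) t Hs.
- exact: unP (peqP 2) t Hs.
Qed.

Lemma relb1_ok i t : i < size (rels M0') -> size t = ar (nth (@rel_dflt _) (rels M0') i) ->
  (rl (nth (@rel_dflt _) (rels M0') i) t <-> relb1 i t).
Proof.
case: i => [|[|[|[|[|[|[|[|i]]]]]]]] //= _ Hs.
- exact: psi2P.
- exact: rho2P.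
- exact: tau0P.
- exact: tau1P.
- exact: unP p01P t Hs.
- exact: unP (peqP 0) t Hs.
- exact: unP (peqP 1) t Hs.
- exact: unP (peqP 2) t Hs.
Qed.

Definition rb0 := rbfull (rels M0) relb0.
Definition rb1 := rbfull (rels M0') relb1.

Lemma sat0 env phi : @sat M0 env phi <-> bsat rb0 env phi.
Proof. exact: (bsat_ok relb0_ok). Qed.
Lemma sat1 env phi : @sat M0' env phi <-> bsat rb1 env phi.
Proof. exact: (bsat_ok relb1_ok). Qed.

Lemma bsat_eqenv rb (e1 e2 : nat -> D3) phi :
  (forall y, e1 y = e2 y) -> bsat rb e1 phi = bsat rb e2 phi.
Proof.
elim: phi e1 e2 => [i vs|x y|p IHp q IHq|x p IHp] e1 e2 H.
- by rewrite /= (eq_map H).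
- by rewrite /= !H.
- by rewrite /= (IHp e1 e2) ?(IHq e1 e2).
- rewrite !bsatEx; apply: eq_has => a; apply: IHp => y; rewrite /upd; case: eqP => //.
Qed.

Definition envof (n : nat) (t : seq ('I_n.+1 -> D3)) (v : nat) : D3 :=
  nth (fun _ => o0) t (v %/ n.+1) (Ordinal (ltn_pmod v (ltn0Sn n))).

Lemma envof_blk n k (env : nat -> D3) v : v < k * n.+1 ->
  envof (mkseq (@blk _ n.+1 env) k) v = env v.
Proof.
move=> Hv; rewrite /envof nth_mkseq; last by rewrite ltn_divLR.
by rewrite /blk /= -divn_eq.
Qed.


Definition CRel (rs : seq (relation D3)) (n k : nat) (phi : ppformula) :
  relation ('I_n.+1 -> D3) := Rel k (fun t => @sat (@Struct D3 rs) (envof t) phi).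

Lemma CRel_pp rs n k phi : all (fun v => v < k * n.+1) (fvs phi) ->
  @pp_definable_power (@Struct D3 rs) n.+1 (CRel rs n k phi).
Proof.
move=> Hall; exists phi => env /=.
apply: sat_ext => y Hy; apply: envof_blk; exact: (allP Hall).
Qed.

Definition mk3 (a b c : D3) : 'I_3 -> D3 := fun i => nth o0 [:: a; b; c] i.
Definition norm3 (u : 'I_3 -> D3) := mk3 (u o0) (u o1) (u o2).

Lemma norm3E u i : norm3 u i = u i.
Proof.
case: i => [[|[|[|m]]] Hi] //; rewrite /norm3 /mk3 /=; congr u; exact: val_inj.
Qed.

Lemma envof_norm (t : seq ('I_3 -> D3)) y :
  envof t y = envof (map norm3 t) y.
Proof.
rewrite /envof; case: t => [|u [|v t]] //=; case: (y %/ 3) => [|[|k]] //=;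
  rewrite ?norm3E //.
case: (ltnP k (size t)) => H.
  by rewrite (nth_map (fun _ => o0)) ?norm3E.
by rewrite !nth_default ?size_map.
Qed.

Lemma bsat_norm rb (t : seq ('I_3 -> D3)) phi :
  bsat rb (envof t) phi = bsat rb (envof (map norm3 t)) phi.
Proof. apply: bsat_eqenv => y; exact: envof_norm. Qed.

Definition chk2 rb phi (h : ('I_3 -> D3) -> D3) (P : seq D3 -> bool) :=
  all (fun a => all (fun b => all (fun c => all (fun d => all (fun e => all (fun f =>
    bsat rb (envof [:: mk3 a b c; mk3 d e f]) phi ==> P [:: h (mk3 a b c); h (mk3 d e f)])
    d3s) d3s) d3s) d3s) d3s) d3s.

Definition chk1 rb phi (h : ('I_3 -> D3) -> D3) (P : seq D3 -> bool) :=
  all (fun a => all (fun b => all (fun c =>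
    bsat rb (envof [:: mk3 a b c]) phi ==> P [:: h (mk3 a b c)]) d3s) d3s) d3s.

Lemma chk2_ok rb phi h P : (forall u, h u = h (norm3 u)) -> chk2 rb phi h P ->
  forall u v, bsat rb (envof [:: u; v]) phi -> P [:: h u; h v].
Proof.
move=> Hh Hc u v; rewrite bsat_norm (Hh u) (Hh v); apply/implyP.
have -> : map norm3 [:: u; v] = [:: norm3 u; norm3 v] by [].
rewrite /norm3; move: (u o0) (u o1) (u o2) (v o0) (v o1) (v o2) => a b c d e f.
move/allP/(_ a (mem_d3s a)): Hc; move/allP/(_ b (mem_d3s b)); move/allP/(_ c (mem_d3s c));
move/allP/(_ d (mem_d3s d)); move/allP/(_ e (mem_d3s e)); move/allP/(_ f (mem_d3s f)).
by [].
Qed.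

Lemma chk1_ok rb phi h P : (forall u, h u = h (norm3 u)) -> chk1 rb phi h P ->
  forall u, bsat rb (envof [:: u]) phi -> P [:: h u].
Proof.
move=> Hh Hc u; rewrite bsat_norm (Hh u); apply/implyP.
have -> : map norm3 [:: u] = [:: norm3 u] by [].
rewrite /norm3; move: (u o0) (u o1) (u o2) => a b c.
move/allP/(_ a (mem_d3s a)): Hc; move/allP/(_ b (mem_d3s b)); move/allP/(_ c (mem_d3s c)).
by [].
Qed.

Definition chkg2 rb phi (g : D3 -> 'I_3 -> D3) (P : seq D3 -> bool) :=
  all (fun a => all (fun b => P [:: a; b] ==> bsat rb (envof [:: g a; g b]) phi) d3s) d3s.
Definition chkg1 rb phi (g : D3 -> 'I_3 -> D3) (P : seq D3 -> bool) :=
  all (fun a => P [:: a] ==> bsat rb (envof [:: g a]) phi) d3s.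

Lemma chkg2_ok rb phi g P : chkg2 rb phi g P ->
  forall a b, P [:: a; b] -> bsat rb (envof [:: g a; g b]) phi.
Proof.
move=> Hc a b; apply/implyP.
by move/allP/(_ a (mem_d3s a)): Hc; move/allP/(_ b (mem_d3s b)).
Qed.
Lemma chkg1_ok rb phi g P : chkg1 rb phi g P ->
  forall a, P [:: a] -> bsat rb (envof [:: g a]) phi.
Proof. by move=> Hc a; apply/implyP; move/allP/(_ a (mem_d3s a)): Hc. Qed.

Definition hf (x p q : D3) : D3 :=
  if val x == 2 then o2
  else if val x == 0 then (if (val p == 2) && (val q == 2) then o1 else o0)
  else (if (val p == 2) || (val q == 2) then o1 else o0).
Definition h1 (u : 'I_3 -> D3) : D3 := hf (u o0) (u o1) (u o2).
Lemma Hh1 u : h1 u = h1 (norm3 u). Proof. by rewrite /h1 !norm3E. Qed.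
Definition g1 (a : D3) : 'I_3 -> D3 :=
  if val a == 0 then mk3 o0 o0 o0 else if val a == 1 then mk3 o1 o2 o2 else mk3 o2 o0 o2.
Definition h2 (u : 'I_3 -> D3) : D3 := u o0.
Lemma Hh2 u : h2 u = h2 (norm3 u). Proof. by rewrite /h2 !norm3E. Qed.
Definition g2 (a : D3) : 'I_3 -> D3 := mk3 a a a.

Definition phA0 := PAnd (PAtom 0 [:: 0; 3]) (PAnd (PAtom 1 [:: 1; 5]) (PAtom 1 [:: 2; 4])).
Definition phA1 := PAtom 1 [:: 0; 3].
Definition phA2 := PAnd (PAtom 2 [:: 3]) (PAnd (PEq 4 5) (PEx 6 (PAnd (PAtom 1 [:: 0; 6]) (PAtom 1 [:: 6; 4])))).
Definition phA3 := PAnd (PAtom 2 [:: 3]) (PAnd (PEq 4 5) (PAtom 1 [:: 0; 4])).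
Definition phA4 := PAnd (PAtom 2 [:: 0]) (PEq 1 2).
Definition phA5 := PAnd (PAtom 3 [:: 0]) (PAnd (PAtom 3 [:: 1]) (PAtom 3 [:: 2])).
Definition phA6 := PAnd (PAtom 4 [:: 0]) (PAnd (PAtom 5 [:: 1]) (PAtom 5 [:: 2])).
Definition phA7 := PAnd (PAtom 5 [:: 0]) (PAnd (PAtom 3 [:: 1]) (PAtom 5 [:: 2])).
Definition CA : seq (relation ('I_3 -> D3)) := [:: CRel (rels M0) 2 2 phA0; CRel (rels M0) 2 2 phA1; CRel (rels M0) 2 2 phA2; CRel (rels M0) 2 2 phA3; CRel (rels M0) 2 1 phA4; CRel (rels M0) 2 1 phA5; CRel (rels M0) 2 1 phA6; CRel (rels M0) 2 1 phA7].
Lemma chkA0 : chk2 rb0 phA0 h1 (relb1 0). Proof. by vm_compute. Qed.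
Lemma chkgA0 : chkg2 rb0 phA0 g1 (relb1 0). Proof. by vm_compute. Qed.
Lemma chkA1 : chk2 rb0 phA1 h1 (relb1 1). Proof. by vm_compute. Qed.
Lemma chkgA1 : chkg2 rb0 phA1 g1 (relb1 1). Proof. by vm_compute. Qed.
Lemma chkA2 : chk2 rb0 phA2 h1 (relb1 2). Proof. by vm_compute. Qed.
Lemma chkgA2 : chkg2 rb0 phA2 g1 (relb1 2). Proof. by vm_compute. Qed.
Lemma chkA3 : chk2 rb0 phA3 h1 (relb1 3). Proof. by vm_compute. Qed.
Lemma chkgA3 : chkg2 rb0 phA3 g1 (relb1 3). Proof. by vm_compute. Qed.
Lemma chkA4 : chk1 rb0 phA4 h1 (relb1 4). Proof. by vm_compute. Qed.
Lemma chkgA4 : chkg1 rb0 phA4 g1 (relb1 4). Proof. by vm_compute. Qed.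
Lemma chkA5 : chk1 rb0 phA5 h1 (relb1 5). Proof. by vm_compute. Qed.
Lemma chkgA5 : chkg1 rb0 phA5 g1 (relb1 5). Proof. by vm_compute. Qed.
Lemma chkA6 : chk1 rb0 phA6 h1 (relb1 6). Proof. by vm_compute. Qed.
Lemma chkgA6 : chkg1 rb0 phA6 g1 (relb1 6). Proof. by vm_compute. Qed.
Lemma chkA7 : chk1 rb0 phA7 h1 (relb1 7). Proof. by vm_compute. Qed.
Lemma chkgA7 : chkg1 rb0 phA7 g1 (relb1 7). Proof. by vm_compute. Qed.
Lemma ppA : forall i, i < size CA -> @pp_definable_power M0 3 (nth (@rel_dflt _) CA i).
Proof.
case=> [|[|[|[|[|[|[|[|i]]]]]]]] // _; apply: CRel_pp; by [].
Qed.
Lemma homfA : @hom (@Struct ('I_3 -> D3) CA) M0' h1.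
Proof.
split; first by []. move=> i Hi t Hs Hr.
case: i Hi Hs Hr => [|[|[|[|[|[|[|[|i]]]]]]]] // _.
- case: t => [|u [|v [|]]] // _ Hr;
  apply/(relb1_ok (i:=0) (t:=map h1 [:: u; v]) isT erefl);
  exact: (chk2_ok (rb:=rb0) (phi:=phA0) (P:=relb1 0) Hh1 chkA0 ((sat0 (envof [:: u; v]) phA0).1 Hr)).
- case: t => [|u [|v [|]]] // _ Hr;
  apply/(relb1_ok (i:=1) (t:=map h1 [:: u; v]) isT erefl);
  exact: (chk2_ok (rb:=rb0) (phi:=phA1) (P:=relb1 1) Hh1 chkA1 ((sat0 (envof [:: u; v]) phA1).1 Hr)).
- case: t => [|u [|v [|]]] // _ Hr;
  apply/(relb1_ok (i:=2) (t:=map h1 [:: u; v]) isT erefl);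
  exact: (chk2_ok (rb:=rb0) (phi:=phA2) (P:=relb1 2) Hh1 chkA2 ((sat0 (envof [:: u; v]) phA2).1 Hr)).
- case: t => [|u [|v [|]]] // _ Hr;
  apply/(relb1_ok (i:=3) (t:=map h1 [:: u; v]) isT erefl);
  exact: (chk2_ok (rb:=rb0) (phi:=phA3) (P:=relb1 3) Hh1 chkA3 ((sat0 (envof [:: u; v]) phA3).1 Hr)).
- case: t => [|u [|]] // _ Hr;
  apply/(relb1_ok (i:=4) (t:=map h1 [:: u]) isT erefl);
  exact: (chk1_ok (rb:=rb0) (phi:=phA4) (P:=relb1 4) Hh1 chkA4 ((sat0 (envof [:: u]) phA4).1 Hr)).
- case: t => [|u [|]] // _ Hr;
  apply/(relb1_ok (i:=5) (t:=map h1 [:: u]) isT erefl);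
  exact: (chk1_ok (rb:=rb0) (phi:=phA5) (P:=relb1 5) Hh1 chkA5 ((sat0 (envof [:: u]) phA5).1 Hr)).
- case: t => [|u [|]] // _ Hr;
  apply/(relb1_ok (i:=6) (t:=map h1 [:: u]) isT erefl);
  exact: (chk1_ok (rb:=rb0) (phi:=phA6) (P:=relb1 6) Hh1 chkA6 ((sat0 (envof [:: u]) phA6).1 Hr)).
- case: t => [|u [|]] // _ Hr;
  apply/(relb1_ok (i:=7) (t:=map h1 [:: u]) isT erefl);
  exact: (chk1_ok (rb:=rb0) (phi:=phA7) (P:=relb1 7) Hh1 chkA7 ((sat0 (envof [:: u]) phA7).1 Hr)).
Qed.
Lemma homgA : @hom M0' (@Struct ('I_3 -> D3) CA) g1.
Proof.
split; first by []. move=> i Hi t Hs Hr.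
case: i Hi Hs Hr => [|[|[|[|[|[|[|[|i]]]]]]]] // _.
- case: t => [|a [|b [|]]] // _ Hr;
  apply: ((sat0 (envof [:: g1 a; g1 b]) phA0).2);
  exact: (chkg2_ok chkgA0 ((relb1_ok (i:=0) (t:=[:: a; b]) isT erefl).1 Hr)).
- case: t => [|a [|b [|]]] // _ Hr;
  apply: ((sat0 (envof [:: g1 a; g1 b]) phA1).2);
  exact: (chkg2_ok chkgA1 ((relb1_ok (i:=1) (t:=[:: a; b]) isT erefl).1 Hr)).
- case: t => [|a [|b [|]]] // _ Hr;
  apply: ((sat0 (envof [:: g1 a; g1 b]) phA2).2);
  exact: (chkg2_ok chkgA2 ((relb1_ok (i:=2) (t:=[:: a; b]) isT erefl).1 Hr)).
- case: t => [|a [|b [|]]] // _ Hr;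
  apply: ((sat0 (envof [:: g1 a; g1 b]) phA3).2);
  exact: (chkg2_ok chkgA3 ((relb1_ok (i:=3) (t:=[:: a; b]) isT erefl).1 Hr)).
- case: t => [|a [|]] // _ Hr;
  apply: ((sat0 (envof [:: g1 a]) phA4).2);
  exact: (chkg1_ok chkgA4 ((relb1_ok (i:=4) (t:=[:: a]) isT erefl).1 Hr)).
- case: t => [|a [|]] // _ Hr;
  apply: ((sat0 (envof [:: g1 a]) phA5).2);
  exact: (chkg1_ok chkgA5 ((relb1_ok (i:=5) (t:=[:: a]) isT erefl).1 Hr)).
- case: t => [|a [|]] // _ Hr;
  apply: ((sat0 (envof [:: g1 a]) phA6).2);
  exact: (chkg1_ok chkgA6 ((relb1_ok (i:=6) (t:=[:: a]) isT erefl).1 Hr)).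
- case: t => [|a [|]] // _ Hr;
  apply: ((sat0 (envof [:: g1 a]) phA7).2);
  exact: (chkg1_ok chkgA7 ((relb1_ok (i:=7) (t:=[:: a]) isT erefl).1 Hr)).
Qed.
Definition phB0 := PAtom 0 [:: 0; 3].
Definition phB1 := PAtom 1 [:: 0; 3].
Definition phB2 := PAtom 4 [:: 0].
Definition phB3 := PAtom 5 [:: 0].
Definition phB4 := PAtom 6 [:: 0].
Definition phB5 := PAtom 7 [:: 0].
Definition CB : seq (relation ('I_3 -> D3)) := [:: CRel (rels M0') 2 2 phB0; CRel (rels M0') 2 2 phB1; CRel (rels M0') 2 1 phB2; CRel (rels M0') 2 1 phB3; CRel (rels M0') 2 1 phB4; CRel (rels M0') 2 1 phB5].
Lemma chkB0 : chk2 rb1 phB0 h2 (relb0 0). Proof. by vm_compute. Qed.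
Lemma chkgB0 : chkg2 rb1 phB0 g2 (relb0 0). Proof. by vm_compute. Qed.
Lemma chkB1 : chk2 rb1 phB1 h2 (relb0 1). Proof. by vm_compute. Qed.
Lemma chkgB1 : chkg2 rb1 phB1 g2 (relb0 1). Proof. by vm_compute. Qed.
Lemma chkB2 : chk1 rb1 phB2 h2 (relb0 2). Proof. by vm_compute. Qed.
Lemma chkgB2 : chkg1 rb1 phB2 g2 (relb0 2). Proof. by vm_compute. Qed.
Lemma chkB3 : chk1 rb1 phB3 h2 (relb0 3). Proof. by vm_compute. Qed.
Lemma chkgB3 : chkg1 rb1 phB3 g2 (relb0 3). Proof. by vm_compute. Qed.
Lemma chkB4 : chk1 rb1 phB4 h2 (relb0 4). Proof. by vm_compute. Qed.
Lemma chkgB4 : chkg1 rb1 phB4 g2 (relb0 4). Proof. by vm_compute. Qed.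
Lemma chkB5 : chk1 rb1 phB5 h2 (relb0 5). Proof. by vm_compute. Qed.
Lemma chkgB5 : chkg1 rb1 phB5 g2 (relb0 5). Proof. by vm_compute. Qed.
Lemma ppB : forall i, i < size CB -> @pp_definable_power M0' 3 (nth (@rel_dflt _) CB i).
Proof.
case=> [|[|[|[|[|[|i]]]]]] // _; apply: CRel_pp; by [].
Qed.
Lemma homfB : @hom (@Struct ('I_3 -> D3) CB) M0 h2.
Proof.
split; first by []. move=> i Hi t Hs Hr.
case: i Hi Hs Hr => [|[|[|[|[|[|i]]]]]] // _.
- case: t => [|u [|v [|]]] // _ Hr;
  apply/(relb0_ok (i:=0) (t:=map h2 [:: u; v]) isT erefl);
  exact: (chk2_ok (rb:=rb1) (phi:=phB0) (P:=relb0 0) Hh2 chkB0 ((sat1 (envof [:: u; v]) phB0).1 Hr)).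
- case: t => [|u [|v [|]]] // _ Hr;
  apply/(relb0_ok (i:=1) (t:=map h2 [:: u; v]) isT erefl);
  exact: (chk2_ok (rb:=rb1) (phi:=phB1) (P:=relb0 1) Hh2 chkB1 ((sat1 (envof [:: u; v]) phB1).1 Hr)).
- case: t => [|u [|]] // _ Hr;
  apply/(relb0_ok (i:=2) (t:=map h2 [:: u]) isT erefl);
  exact: (chk1_ok (rb:=rb1) (phi:=phB2) (P:=relb0 2) Hh2 chkB2 ((sat1 (envof [:: u]) phB2).1 Hr)).
- case: t => [|u [|]] // _ Hr;
  apply/(relb0_ok (i:=3) (t:=map h2 [:: u]) isT erefl);
  exact: (chk1_ok (rb:=rb1) (phi:=phB3) (P:=relb0 3) Hh2 chkB3 ((sat1 (envof [:: u]) phB3).1 Hr)).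
- case: t => [|u [|]] // _ Hr;
  apply/(relb0_ok (i:=4) (t:=map h2 [:: u]) isT erefl);
  exact: (chk1_ok (rb:=rb1) (phi:=phB4) (P:=relb0 4) Hh2 chkB4 ((sat1 (envof [:: u]) phB4).1 Hr)).
- case: t => [|u [|]] // _ Hr;
  apply/(relb0_ok (i:=5) (t:=map h2 [:: u]) isT erefl);
  exact: (chk1_ok (rb:=rb1) (phi:=phB5) (P:=relb0 5) Hh2 chkB5 ((sat1 (envof [:: u]) phB5).1 Hr)).
Qed.
Lemma homgB : @hom M0 (@Struct ('I_3 -> D3) CB) g2.
Proof.
split; first by []. move=> i Hi t Hs Hr.
case: i Hi Hs Hr => [|[|[|[|[|[|i]]]]]] // _.
- case: t => [|a [|b [|]]] // _ Hr;
  apply: ((sat1 (envof [:: g2 a; g2 b]) phB0).2);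
  exact: (chkg2_ok chkgB0 ((relb0_ok (i:=0) (t:=[:: a; b]) isT erefl).1 Hr)).
- case: t => [|a [|b [|]]] // _ Hr;
  apply: ((sat1 (envof [:: g2 a; g2 b]) phB1).2);
  exact: (chkg2_ok chkgB1 ((relb0_ok (i:=1) (t:=[:: a; b]) isT erefl).1 Hr)).
- case: t => [|a [|]] // _ Hr;
  apply: ((sat1 (envof [:: g2 a]) phB2).2);
  exact: (chkg1_ok chkgB2 ((relb0_ok (i:=2) (t:=[:: a]) isT erefl).1 Hr)).
- case: t => [|a [|]] // _ Hr;
  apply: ((sat1 (envof [:: g2 a]) phB3).2);
  exact: (chkg1_ok chkgB3 ((relb0_ok (i:=3) (t:=[:: a]) isT erefl).1 Hr)).
- case: t => [|a [|]] // _ Hr;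
  apply: ((sat1 (envof [:: g2 a]) phB4).2);
  exact: (chkg1_ok chkgB4 ((relb0_ok (i:=4) (t:=[:: a]) isT erefl).1 Hr)).
- case: t => [|a [|]] // _ Hr;
  apply: ((sat1 (envof [:: g2 a]) phB5).2);
  exact: (chkg1_ok chkgB5 ((relb0_ok (i:=5) (t:=[:: a]) isT erefl).1 Hr)).
Qed.

Theorem lemma6p5 : pp_constructs M0 M0' /\ pp_constructs M0' M0.
Proof.
split.
- exists 3, CA; split; first by []; split; first exact: ppA.
  by split; [exists h1; exact: homfA | exists g1; exact: homgA].
- exists 3, CB; split; first by []; split; first exact: ppB.
  by split; [exists h2; exact: homfB | exists g2; exact: homgB].
Qed.
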